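(* For every integer $k\ge 3$, $M_k(3)\ge \frac{3}{4}\,2^k+2$.
   Context: All graphs are finite and simple. A path $v_1,\ldots,v_r$ in a graph $G$ is degree-monotone if $\deg_G(v_1)\le\cdots\le\deg_G(v_r)$; its order is $r$. Let $mp(G)$ be the maximum order of a degree-monotone path in $G$. For a $k$-edge-coloring of $K_n$ with colors $1,\ldots,k$, let $G_j$ be the spanning subgraph consisting of the edges colored $j$ (degrees taken in $G_j$). $M_k(m)$ is the minimum integer $M$ such that for every $n\ge M$ and every $k$-edge-coloring of $K_n$ there is some $j$ with $mp(G_j)\ge m$. *)

(* Defs.v *)
From mathcomp Require Import all_boot.
Set Implicit Arguments. Unset Strict Implicit. Unset Printing Implicit Defensive.

(* A simple graph on a finite vertex type T is given by an adjacency relation e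
   (assumed symmetric and irreflexive where relevant). *)

Definition deg (T : finType) (e : rel T) (x : T) : nat := #|[set y | e x y]|.

Definition dm_path (T : finType) (e : rel T) (s : seq T) : bool :=
  [&& uniq s, sorted e s & sorted (fun x y => deg e x <= deg e y) s].

(* mp(G) >= m  : there is a degree-monotone path of order at least m
   (mp is the maximum order of such a path). *)
Definition mp_ge (T : finType) (e : rel T) (m : nat) : Prop :=
  exists s : seq T, dm_path e s /\ m <= size s.

(* A k-edge-colouring of K_n: a symmetric map c : 'I_n -> 'I_n -> 'I_k
   (values on the diagonal are irrelevant).  Colour class j: *)
Definition colour_graph (n k : nat) (c : 'I_n -> 'I_n -> 'I_k) (j : 'I_k)
  : rel 'I_n := fun x y => (x != y) && (c x y == j).

Definition sym_colouring (n k : nat) (c : 'I_n -> 'I_n -> 'I_k) : Prop :=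
  forall x y, c x y = c y x.

(* M satisfies the defining property of M_k(m): for every n >= M and every
   k-edge-colouring of K_n, some colour class G_j has mp(G_j) >= m.
   M_k(m) is the least such M. *)
Definition Mk_good (k m M : nat) : Prop :=
  forall n, M <= n -> forall c : 'I_n -> 'I_n -> 'I_k, sym_colouring c ->
    exists j : 'I_k, mp_ge (colour_graph c j) m.

(* Main.v *)
Require Import Defs.
From mathcomp Require Import all_boot.
From mathcomp Require Import zify.

Lemma cardI n (P : pred nat) : #|[set y : 'I_n | P (val y)]| = count P (iota 0 n).
Proof.
rewrite -val_enum_ord count_map cardsE cardE size_filter /enum_mem.
rewrite count_filter; apply: eq_count => y /=. by rewrite !inE andbT.
Qed.

Definition Dg (n : nat) (g : nat -> nat -> nat) (j v : nat) :=
  count (fun w => (w != v) && (g v w == j)) (iota 0 n).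

Definition good n (g : nat -> nat -> nat) := forall a b d, a < n -> b < n -> d < n ->
  a != b -> b != d -> a != d -> g a b = g b d ->
  Dg n g (g a b) a <= Dg n g (g a b) b -> Dg n g (g a b) b <= Dg n g (g a b) d -> False.

Definition bnd n (g : nat -> nat -> nat) K := forall i j, i < n -> j < n -> g i j < K.
Definition symn n (g : nat -> nat -> nat) := forall i j, i < n -> j < n -> g i j = g j i.

Definition goodb n g := all (fun a => all (fun b => all (fun d =>
  ~~ [&& a != b, b != d, a != d, g a b == g b d,
      Dg n g (g a b) a <= Dg n g (g a b) b & Dg n g (g a b) b <= Dg n g (g a b) d])
  (iota 0 n)) (iota 0 n)) (iota 0 n).
Definition bndb n (g : nat -> nat -> nat) K :=
  all (fun i => all (fun j => g i j < K) (iota 0 n)) (iota 0 n).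
Definition symb n (g : nat -> nat -> nat) :=
  all (fun i => all (fun j => g i j == g j i) (iota 0 n)) (iota 0 n).

Lemma inI a n : a < n -> a \in iota 0 n.
Proof. by rewrite mem_iota add0n. Qed.
Arguments inI {a n}.

Lemma goodbP n g : goodb n g -> good n g.
Proof.
move=> /allP H a b d ha hb hd ab bd ad e l1 l2.
move: (H a (inI ha)) => /allP /(_ b (inI hb)) /allP /(_ d (inI hd)).
by rewrite ab bd ad l1 l2 e eqxx.
Qed.

Lemma bndbP n g K : bndb n g K -> bnd n g K.
Proof.
move=> /allP H i j hi hj; move: (H i (inI hi)) => /allP /(_ j (inI hj)).
by [].
Qed.

Lemma symbP n g : symb n g -> symn n g.
Proof.
move=> /allP H i j hi hj; move: (H i (inI hi)) => /allP /(_ j (inI hj)) /eqP.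
by [].
Qed.
Definition tabs : seq (seq (seq nat)) := [:: [:: ];
 [:: [:: 0]];
 [:: [:: 0; 0]; [:: 0; 0]];
 [:: [:: 0; 2; 0]; [:: 2; 0; 1]; [:: 0; 1; 0]];
 [:: [:: 0; 0; 0; 2]; [:: 0; 0; 1; 2]; [:: 0; 1; 0; 1]; [:: 2; 2; 1; 0]];
 [:: [:: 0; 0; 0; 2; 0]; [:: 0; 0; 1; 0; 2]; [:: 0; 1; 0; 0; 1]; [:: 2; 0; 0; 0; 0]; [:: 0; 2; 1; 0; 0]];
 [:: [:: 0; 1; 2; 2; 2; 0]; [:: 1; 0; 2; 0; 2; 2]; [:: 2; 2; 0; 0; 1; 0]; [:: 2; 0; 0; 0; 0; 1]; [:: 2; 2; 1; 0; 0; 0]; [:: 0; 2; 0; 1; 0; 0]];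
 [:: [:: 0; 1; 2; 0; 2; 1; 2]; [:: 1; 0; 1; 1; 0; 2; 0]; [:: 2; 1; 0; 2; 0; 1; 0]; [:: 0; 1; 2; 0; 2; 1; 2]; [:: 2; 0; 0; 2; 0; 0; 1]; [:: 1; 2; 1; 1; 0; 0; 0]; [:: 2; 0; 0; 2; 1; 0; 0]]].

Definition base n i j := nth 0 (nth [::] (nth [::] tabs n) i) j.

Lemma base_ok n : n <= 7 -> good n (base n) /\ bnd n (base n) 3 /\ symn n (base n).
Proof.
move=> hn; split; [apply: goodbP | split; [apply: bndbP | apply: symbP]];
  do 8! (case: n hn => [|n] hn; first by vm_compute).
all: by [].
Qed.

Definition comb x (g1 g2 : nat -> nat -> nat) (nc : nat) i j :=
  if (i < x) && (j < x) then g1 i j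
  else if (x <= i) && (x <= j) then g2 (i - x) (j - x) else nc.

Lemma count_const (b : bool) (s : seq nat) :
  count (fun _ => b) s = b * size s.
Proof. by case: b; rewrite ?count_predT ?count_pred0 ?mul1n. Qed.

Section Comb.
Variables (x y nc : nat) (g1 g2 : nat -> nat -> nat).
Hypothesis b1 : bnd x g1 nc.
Hypothesis b2 : bnd y g2 nc.
Let h := comb x g1 g2 nc.

Lemma DgL j v : v < x ->
  Dg (x + y) h j v = Dg x g1 j v + (nc == j) * y.
Proof.
move=> hv; rewrite /Dg iotaD count_cat add0n; congr (_ + _).
  apply: eq_in_count => w; rewrite mem_iota add0n => /andP [_ hw].
  by rewrite /h /comb hv hw.
rewrite -[in RHS](size_iota x y) -count_const; apply: eq_in_count => w.
rewrite mem_iota => /andP [hw _].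
rewrite /h /comb; have -> : (w < x) = false by lia.
rewrite andbF (_ : (x <= v) = false) ?andFb; last by lia.
have -> : (w != v) by apply/eqP; lia.
by [].
Qed.

Lemma DgR j v : x <= v ->
  Dg (x + y) h j v = (nc == j) * x + Dg y g2 j (v - x).
Proof.
move=> hv; rewrite /Dg iotaD count_cat add0n; congr (_ + _).
  rewrite -[in RHS](size_iota 0 x) -count_const; apply: eq_in_count => w.
  rewrite mem_iota => /andP [_ hw].
  rewrite /h /comb; have -> : (v < x) = false by lia.
  rewrite andFb (_ : (x <= w) = false) ?andbF; last by lia.
  have -> : (w != v) by apply/eqP; lia.
  by [].
rewrite -{1}(addn0 x) iotaDl count_map; apply: eq_in_count => w.
rewrite mem_iota add0n => /andP [_ hw] /=.
rewrite /h /comb; have -> : (v < x) = false by lia.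
rewrite andFb hv leq_addr /= addKn.
have -> : (x + w != v) = (w != v - x) by apply/idP/idP => /eqP H; apply/eqP; lia.
by [].
Qed.

Lemma comb_good : good x g1 -> good y g2 -> (x = y -> x = 0) -> good (x + y) h.
Proof.
move=> G1 G2 xy a b d ha hb hd ab bd ad e l1 l2.
have hL : forall i, i < x -> forall j, j < x -> h i j = g1 i j.
  by move=> i hi j hj; rewrite /h /comb hi hj.
have hR : forall i, x <= i -> i < x + y -> forall j, x <= j -> j < x + y ->
     h i j = g2 (i - x) (j - x).
  move=> i hi hi' j hj hj'; rewrite /h /comb hi hj /=.
  by rewrite (_ : (i < x) = false) //; lia.
have hM : forall i j, i < x + y -> j < x + y -> (i < x) != (j < x) -> h i j = nc.
  move=> i j hi hj; rewrite /h /comb.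
  by case: (ltnP i x); case: (ltnP j x) => //= *; rewrite ?andbF.
case: (ltnP a x) => ax; case: (ltnP b x) => bx; case: (ltnP d x) => dx.
- rewrite !hL // in e l1 l2; rewrite !DgL // in l1 l2.
  have nj : (nc == g1 a b) = false.
    by apply/eqP => E; have := b1 _ _ ax bx; rewrite -E ltnn.
  rewrite nj !addn0 in l1 l2.
  by apply: (G1 a b d ax bx dx ab bd ad e l1 l2).
- move: e; rewrite hL // hM //; last by lia.
  by move=> E; have := b1 _ _ ax bx; rewrite E ltnn.
- move: e l1 l2; rewrite hM //; last by lia.
  rewrite (DgL _ a) // (DgL _ d) // (DgR _ b) // eqxx => _.
  have z1 : Dg x g1 nc a = 0.
    apply/eqP; rewrite -leqn0 leqNgt -has_count; apply/hasPn => w.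
    rewrite mem_iota add0n => /andP [_ hw]; apply/negP => /andP [_ /eqP E].
    by have := b1 _ _ ax hw; rewrite E ltnn.
  have z2 : Dg x g1 nc d = 0.
    apply/eqP; rewrite -leqn0 leqNgt -has_count; apply/hasPn => w.
    rewrite mem_iota add0n => /andP [_ hw]; apply/negP => /andP [_ /eqP E].
    by have := b1 _ _ dx hw; rewrite E ltnn.
  have z3 : Dg y g2 nc (b - x) = 0.
    apply/eqP; rewrite -leqn0 leqNgt -has_count; apply/hasPn => w.
    rewrite mem_iota add0n => /andP [_ hw]; apply/negP => /andP [_ /eqP E].
    have bx' : b - x < y by lia.
    by have := b2 _ _ bx' hw; rewrite E ltnn.
  rewrite z1 z2 z3 => l1 l2.
  have E : x = y by lia.
  by have := xy E; lia.
- move: e; rewrite hM //; last by lia.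
  rewrite (hR b) // => E.
  have bx' : b - x < y by lia. have dx' : d - x < y by lia.
  by have := b2 _ _ bx' dx'; rewrite -E ltnn.
- move: e; rewrite hM //; last by lia.
  rewrite (hL b) // => E.
  by have := b1 _ _ bx dx; rewrite -E ltnn.
- move: e l1 l2; rewrite hM //; last by lia.
  rewrite (DgL _ b) // (DgR _ a) // (DgR _ d) // eqxx => _.
  have z1 : Dg x g1 nc b = 0.
    apply/eqP; rewrite -leqn0 leqNgt -has_count; apply/hasPn => w.
    rewrite mem_iota add0n => /andP [_ hw]; apply/negP => /andP [_ /eqP E].
    by have := b1 _ _ bx hw; rewrite E ltnn.
  have z2 : Dg y g2 nc (a - x) = 0.
    apply/eqP; rewrite -leqn0 leqNgt -has_count; apply/hasPn => w.
    rewrite mem_iota add0n => /andP [_ hw]; apply/negP => /andP [_ /eqP E].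
    have ax' : a - x < y by lia.
    by have := b2 _ _ ax' hw; rewrite E ltnn.
  have z3 : Dg y g2 nc (d - x) = 0.
    apply/eqP; rewrite -leqn0 leqNgt -has_count; apply/hasPn => w.
    rewrite mem_iota add0n => /andP [_ hw]; apply/negP => /andP [_ /eqP E].
    have dx' : d - x < y by lia.
    by have := b2 _ _ dx' hw; rewrite E ltnn.
  rewrite z1 z2 z3 => l1 l2.
  have E : x = y by lia.
  by have := xy E; lia.
- move: e; rewrite (hR a) // hM //; last by lia.
  have ax' : a - x < y by lia. have bx' : b - x < y by lia.
  by move=> E; have := b2 _ _ ax' bx'; rewrite E ltnn.
- rewrite !(hR _ _ _ _ _) // in e l1 l2; rewrite !DgR // in l1 l2.
  have ax' : a - x < y by lia. have bx' : b - x < y by lia.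
  have dx' : d - x < y by lia.
  have nj : (nc == g2 (a - x) (b - x)) = false.
    by apply/eqP => E; have := b2 _ _ ax' bx'; rewrite -E ltnn.
  rewrite nj !add0n in l1 l2.
  apply: (G2 (a - x) (b - x) (d - x) ax' bx' dx' _ _ _ e l1 l2); apply/eqP; lia.
Qed.

Lemma comb_bnd : bnd (x + y) h nc.+1.
Proof.
move=> i j hi hj; rewrite /h /comb.
case: ifP => [/andP [hi' hj'] | _]; first by have := b1 _ _ hi' hj'; lia.
case: ifP => [/andP [hi' hj'] | _] //.
have hi2 : i - x < y by lia. have hj2 : j - x < y by lia.
by have := b2 _ _ hi2 hj2; lia.
Qed.
Lemma comb_sym : symn x g1 -> symn y g2 -> symn (x + y) h.
Proof.
move=> S1 S2 i j hi hj; rewrite /h /comb andbC.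
case: ifP => [/andP [hj' hi'] | _]; first by apply: S1.
rewrite andbC; case: ifP => [/andP [hi' hj'] | _] //.
apply: S2; lia.
Qed.
End Comb.

Fixpoint aa m := match m with 0 => 7 | m'.+1 => (aa m').*2.-1 end.

Lemma aaE m : aa m = 3 * 2 ^ m.+1 + 1.
Proof. elim: m => [|m IH] //=; rewrite IH [in RHS]expnS; lia. Qed.

Fixpoint G m n : nat -> nat -> nat :=
  match m with
  | 0 => base n
  | m'.+1 => let x := minn n (aa m') in comb x (G m' x) (G m' (n - x)) (m' + 3)
  end.

Lemma G_ok m n : n <= aa m -> good n (G m n) /\ bnd n (G m n) (m + 3) /\ symn n (G m n).
Proof.
elim: m n => [|m IH] n hn; first exact: base_ok.
have ha : 1 <= aa m by rewrite aaE; lia.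
rewrite /=; set x := minn n (aa m).
have hx : x <= aa m by rewrite /x geq_minr.
have hy : n - x <= aa m by move: hn; rewrite /= /x; lia.
have [g1 [b1 s1]] := IH _ hx. have [g2 [b2 s2]] := IH _ hy.
have en : n = x + (n - x) by rewrite /x; lia.
rewrite [in X in good X _]en [in X in bnd X _ _]en [in X in symn X _]en.
split; [|split].
- apply: (comb_good _ _ _ _ _ b1 b2 g1 g2); move: hn; rewrite /= /x; lia.
- rewrite addSn; exact: (comb_bnd _ _ _ _ _ b1 b2).
- exact: (comb_sym _ _ _ _ _ s1 s2).
Qed.

Lemma deg_Dg n k (g : nat -> nat -> nat) (c : 'I_n -> 'I_n -> 'I_k)
  (hc : forall u v, val (c u v) = g u v) (j : 'I_k) (v : 'I_n) :
  deg (colour_graph c j) v = Dg n g (val j) (val v).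
Proof.
rewrite /deg /Dg -cardI; apply: eq_card => y; rewrite !inE /colour_graph.
by rewrite -(inj_eq val_inj (c v y)) hc eq_sym (inj_eq val_inj).
Qed.

Theorem lemma3p7 (k : nat) : 3 <= k ->
  forall M : nat, Mk_good k 3 M -> 3 * 2 ^ k + 8 <= 4 * M.
Proof.
case: k => [|k] // hk M HM; rewrite leqNgt; apply/negP => hlt.
pose m := k.+1 - 3; pose n := aa m.
have hMn : M <= n.
  rewrite /n aaE; have ek : k.+1 = m.+1 + 2 by rewrite /m; lia.
  by rewrite ek expnD in hlt; lia.
have [gd [bd sy]] := G_ok m n (leqnn n).
pose c : 'I_n -> 'I_n -> 'I_k.+1 := fun i j => inord (G m n i j).
have hc : forall u v, val (c u v) = G m n u v.
  move=> u v; apply: inordK; have := bd _ _ (ltn_ord u) (ltn_ord v).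
  rewrite /m; lia.
have sc : sym_colouring c by move=> u v; rewrite /c sy.
have [j [s [dm hs]]] := HM n hMn c sc.
case: s dm hs => [|a [|b [|d s']]] // /and3P [u e dg] _.
move: u e dg => /=; rewrite !inE !negb_or => /andP [/and3P [ab ad _] /andP [/andP [bd' _] _]].
move=> /and3P [/andP [_ /eqP eab] /andP [_ /eqP ebd] _].
move=> /and3P [l1 l2 _].
rewrite !(deg_Dg _ _ _ _ hc) in l1 l2.
have e1 : G m n a b = val j by rewrite -hc eab.
have e2 : G m n b d = val j by rewrite -hc ebd.
apply: (gd (val a) (val b) (val d)) => //; try exact: ltn_ord.
- by rewrite e1 e2.
- by rewrite e1.
- by rewrite e1.
Qed.
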